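(* Let $P$ be a commutative ring, $x,y$ a regular sequence in $P$, and $a,n,r$ integers with $a\ge0$, $n\ge1$, $0\le r\le n-1$; let $f=x^n+y^n$ and $N=an+r$. Assume $f$ is a regular element of $P$ and let $R=P/(f)$. Put $$D=\begin{bmatrix}x^{n-r}&(-1)^{a-1}y^r\\(-1)^ay^{n-r}&x^r\end{bmatrix},\qquad \check D=\begin{bmatrix}x^r&(-1)^ay^r\\(-1)^{a+1}y^{n-r}&x^{n-r}\end{bmatrix}.$$ Then $$\cdots\xrightarrow{\check D}R^2\xrightarrow{D}R^2\xrightarrow{\check D}R^2\xrightarrow{D}R^2\xrightarrow{[x^N\ y^N]}R\to R/(x^N,y^N)R\to0$$ is a resolution of $R/(x^N,y^N)R$ by free $R$-modules. *)

(* Defs.v *)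
From HB Require Import structures.
From mathcomp Require Import all_boot all_order all_algebra.
Set Implicit Arguments. Unset Strict Implicit. Unset Printing Implicit Defensive.
Import GRing.Theory.
Local Open Scope ring_scope.

Definition regular_elt (P : comRingType) (f : P) : Prop :=
  forall p : P, f * p = 0 -> p = 0.

(* x, y is a regular sequence in P:
   x is a non-zero-divisor on P, y is a non-zero-divisor on P/(x),
   and P/(x,y) <> 0, i.e. (x,y) is a proper ideal. *)
Definition regular_seq2 (P : comRingType) (x y : P) : Prop :=
  [/\ regular_elt x,
      (forall p q : P, y * p = x * q -> exists s : P, p = x * s)
    & ~ (exists a b : P, a * x + b * y = 1)].

(* Congruence of matrices over P modulo f, i.e. equality of their images
   in matrices over R = P/(f). *)
Definition eqmod (P : comRingType) (f : P) (m n : nat) (A B : 'M[P]_(m, n)) : Prop :=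
  exists C : 'M[P]_(m, n), A - B = f *: C.

(* Exactness over R = P/(f) of  R^p --B--> R^n --A--> R^m  (matrices acting on
   column vectors, with entries reduced mod f): A*B = 0 in R and ker A = im B. *)
Definition exact_mod (P : comRingType) (f : P) (m n p : nat)
    (A : 'M[P]_(m, n)) (B : 'M[P]_(n, p)) : Prop :=
  eqmod f (A *m B) 0 /\
  forall u : 'cV[P]_n, eqmod f (A *m u) 0 ->
    exists v : 'cV[P]_p, eqmod f (B *m v) u.

Definition mx2 (P : comRingType) (a b c d : P) : 'M[P]_2 :=
  \matrix_(i < 2, j < 2)
    if (i == 0 :> nat) then (if (j == 0 :> nat) then a else b)
    else (if (j == 0 :> nat) then c else d).

Definition row2 (P : comRingType) (a b : P) : 'M[P]_(1, 2) :=
  \row_(j < 2) if (j == 0 :> nat) then a else b.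

(* Main.v *)
Require Import Defs.
From HB Require Import structures.
From mathcomp Require Import all_boot all_order all_algebra.
Import GRing.Theory.
Local Open Scope ring_scope.

Lemma regX (P : comRingType) (x : P) (m : nat) :
  regular_elt x -> forall p q : P, x ^+ m * p = x ^+ m * q -> p = q.
Proof.
move=> rx; elim: m => [|m IH] p q; first by rewrite !expr0 !mul1r.
rewrite exprS -!mulrA => H; apply: IH; apply/eqP; rewrite -subr_eq0.
by apply/eqP; apply: rx; rewrite mulrBr H subrr.
Qed.

Lemma K1 (P : comRingType) (x y : P) (m : nat) :
  regular_seq2 x y -> forall p q : P, y * p = x ^+ m * q ->
  exists t, p = x ^+ m * t.
Proof.
case=> rx ry _; elim: m => [|m IH] p q H; first by exists p; rewrite expr0 mul1r.
rewrite exprS -mulrA in H.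
have [s Hs] := ry _ _ H.
rewrite Hs mulrCA in H.
have := @regX _ x 1 rx (y * s) (x ^+ m * q); rewrite expr1 => /(_ H) H2.
have [t Ht] := IH _ _ H2.
by exists t; rewrite Hs Ht exprS mulrA.
Qed.

Lemma K (P : comRingType) (x y : P) (k m : nat) :
  regular_seq2 x y -> forall p q : P, y ^+ k * p = x ^+ m * q ->
  exists t, p = x ^+ m * t.
Proof.
move=> hxy; elim: k => [|k IH] p q H; first by exists q; rewrite -H expr0 mul1r.
rewrite exprSr -mulrA in H.
have [t Ht] := IH _ _ H.
exact: K1 hxy _ _ Ht.
Qed.

Lemma eqmodE2 (P : comRingType) (f : P) (m n : nat) (A B : 'M[P]_(m, n)) :
  (forall i j, exists c, A i j - B i j = f * c) -> eqmod f A B.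
Proof.
move=> H.
have H' : forall i j, exists c, A i j - B i j == f * c.
  by move=> i j; have [c Hc] := H i j; exists c; rewrite Hc.
exists (\matrix_(i, j) xchoose (H' i j)); apply/matrixP => i j.
by rewrite !mxE; apply/eqP; exact: (xchooseP (H' i j)).
Qed.

Lemma exact_fact (P : comRingType) (f : P) (k : nat) (A B : 'M[P]_k) :
  regular_elt f -> A *m B = f *: 1%:M -> B *m A = f *: 1%:M -> exact_mod f A B.
Proof.
move=> rf hAB hBA; split; first by exists 1%:M; rewrite subr0.
move=> u [C]; rewrite subr0 => hC; exists C; exists 0; rewrite scaler0.
have : f *: (B *m C - u) = 0.
  by rewrite scalerBr scalemxAr -hC mulmxA hBA -scalemxAl mul1mx subrr.
move=> h; apply/matrixP => i j; rewrite !mxE.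
by apply: rf; have /matrixP/(_ i j) := h; rewrite !mxE.
Qed.

Lemma Lker (P : comRingType) (x y : P) (n r : nat) :
  regular_seq2 x y -> (r <= n)%N -> forall a u1 u2 c,
  x ^+ (a * n + r) * u1 + y ^+ (a * n + r) * u2 = (x ^+ n + y ^+ n) * c ->
  exists v1 v2, u1 = x ^+ (n - r) * v1 + (-1) ^+ a.+1 * y ^+ r * v2 /\
                u2 = (-1) ^+ a * y ^+ (n - r) * v1 + x ^+ r * v2.
Proof.
move=> hxy hr; have rx : regular_elt x by case: hxy.
elim=> [|a IH] u1 u2 c.
  rewrite mul0n add0n.
  have hx : x ^+ n = x ^+ r * x ^+ (n - r) by rewrite -exprD subnKC.
  have hy : y ^+ n = y ^+ r * y ^+ (n - r) by rewrite -exprD subnKC.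
  rewrite hx hy => H.
  have E : y ^+ r * (y ^+ (n - r) * c - u2) = x ^+ r * (u1 - x ^+ (n - r) * c).
    have H' : x ^+ r * u1 = x ^+ r * x ^+ (n - r) * c + y ^+ r * y ^+ (n - r) * c - y ^+ r * u2.
      by rewrite -mulrDl -H addrK.
    by rewrite !mulrBr !mulrA H' [RHS]addrAC [_ + y ^+ r * _ * c]addrC addrK.
  have [t Ht] := @K _ _ _ _ _ hxy _ _ E.
  rewrite Ht mulrCA in E.
  have E2 := @regX _ _ _ rx _ _ E.
  exists c, (- t); split.
    by rewrite expr1 mulN1r mulNr mulrN opprK E2 addrC subrK.
  by rewrite expr0 mul1r mulrN -Ht opprB addrC subrK.
rewrite mulSn -addnA (exprD x n) (exprD y n) => H.
set M := (a * n + r)%N in H *.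
have E : y ^+ n * (c - y ^+ M * u2) = x ^+ n * (x ^+ M * u1 - c).
  have H' : x ^+ n * (x ^+ M * u1) = x ^+ n * c + y ^+ n * c - y ^+ n * (y ^+ M * u2).
    by rewrite -mulrDl -H !mulrA addrK.
  by rewrite !mulrBr H' [RHS]addrAC [_ + y ^+ n * c]addrC addrK.
have [t Ht] := @K _ _ _ _ _ hxy _ _ E.
rewrite Ht mulrCA in E.
have E2 := @regX _ _ _ rx _ _ E.
have H2 : x ^+ M * u1 + y ^+ M * (- u2) = (x ^+ n + y ^+ n) * t.
  by rewrite mulrN mulrDl E2 -Ht [RHS]addrC addrA subrK.
have [v1 [v2 [h1 h2]]] := IH _ _ _ H2.
exists v1, (- v2); split.
  by rewrite h1 [in RHS]exprS mulN1r !mulNr mulrN opprK.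
by rewrite -[u2]opprK h2 opprD mulrN exprS mulN1r !mulNr.
Qed.

Lemma mx2_mul (P : comRingType) (a b c d a' b' c' d' : P) :
  mx2 a b c d *m mx2 a' b' c' d' =
  mx2 (a * a' + b * c') (a * b' + b * d') (c * a' + d * c') (c * b' + d * d').
Proof.
apply/matrixP => i j; rewrite !mxE !big_ord_recr big_ord0 /= add0r !mxE /=.
by case: i => [[|[|i]] Hi] //; case: j => [[|[|j]] Hj].
Qed.

Lemma mx2_scal (P : comRingType) (f : P) :
  f *: (1%:M : 'M[P]_2) = mx2 f 0 0 f.
Proof.
apply/matrixP => i j; rewrite !mxE.
by case: i => [[|[|i]] Hi] //; case: j => [[|[|j]] Hj] //=; rewrite ?mulr1 ?mulr0.
Qed.

Lemma DDc (P : comRingType) (s X X' Y Y' : P) : s * s = 1 ->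
  mx2 X' (- s * Y) (s * Y') X *m mx2 X (s * Y) (- s * Y') X' =
  (X * X' + Y * Y') *: 1%:M.
Proof.
move=> hs; rewrite mx2_mul mx2_scal; congr mx2.
- by rewrite [X' * X]mulrC !mulNr mulrN opprK mulrACA hs mul1r.
- by rewrite !mulNr [s * Y * X']mulrC subrr.
- by rewrite mulNr mulrN [s * Y' * X]mulrC subrr.
- by rewrite mulrACA hs mul1r addrC [Y' * Y]mulrC.
Qed.

Lemma DcD (P : comRingType) (s X X' Y Y' : P) : s * s = 1 ->
  mx2 X (s * Y) (- s * Y') X' *m mx2 X' (- s * Y) (s * Y') X =
  (X * X' + Y * Y') *: 1%:M.
Proof.
move=> hs; rewrite mx2_mul mx2_scal; congr mx2.
- by rewrite mulrACA hs mul1r.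
- by rewrite mulNr mulrN [s * Y * X]mulrC addrC subrr.
- by rewrite !mulNr [s * Y' * X']mulrC addrC subrr.
- by rewrite !mulNr mulrN opprK mulrACA hs mul1r addrC [X' * X]mulrC [Y' * Y]mulrC.
Qed.

Lemma e0_id (P : comRingType) (A B X X' Y Y' : P) (a : nat) :
  X * X' = A -> Y * Y' = B ->
  exists c, A ^+ a * X * X' + B ^+ a * Y * ((-1) ^+ a * Y') = (A + B) * c.
Proof.
move=> hX hY; have hS := subrXX A (- B) a.+1.
rewrite opprK exprNn (exprS (-1 : P)) mulN1r mulNr opprK in hS.
exists (\sum_(i < a.+1) A ^+ (a.+1.-1 - i) * (- B) ^+ i); rewrite -hS.
by rewrite -mulrA hX -exprSr -(mulrA (B ^+ a)) (mulrCA Y) hY mulrCA -exprSr.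
Qed.

Lemma e1_id (P : comRingType) (A B X Y s : P) (a : nat) : s = (-1) ^+ a ->
  exists c, A ^+ a * X * (- s * Y) + B ^+ a * Y * X = (A + B) * c.
Proof.
move=> hs; have hS := subrXX A (- B) a.
rewrite opprK exprNn -hs in hS.
have ss : s * s = 1 by rewrite hs -expr2 sqrr_sign.
exists (- (s * (X * Y * \sum_(i < a) A ^+ (a.-1 - i) * (- B) ^+ i))).
rewrite mulrN (mulrCA (A + B)) (mulrCA (A + B)) -hS.
rewrite mulrBr mulrBr opprB addrC; congr (_ + _).
  rewrite (mulrCA (X * Y)) (mulrA s s) ss mul1r [LHS]mulrC -mulrA [Y * _]mulrC.
  by rewrite mulrA.
rewrite mulNr mulrN; congr (- _).
by rewrite mulrCA; congr (s * _); rewrite -mulrA mulrC.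
Qed.

Lemma row2_mul (P : comRingType) (a b a' b' c' d' : P) :
  row2 a b *m mx2 a' b' c' d' = row2 (a * a' + b * c') (a * b' + b * d').
Proof.
apply/matrixP => i j; rewrite !mxE !big_ord_recr big_ord0 /= add0r !mxE /=.
by case: j => [[|[|j]] Hj].
Qed.

Theorem corollary9p3 (P : comRingType) (x y : P) (a n r : nat)
  (hxy : regular_seq2 x y) (hn : (1 <= n)%N) (hr : (r <= n.-1)%N)
  (hf : regular_elt (x ^+ n + y ^+ n)) :
  let f := x ^+ n + y ^+ n in
  let N := (a * n + r)%N in
  let D := mx2 (x ^+ (n - r)) ((-1) ^+ a.+1 * y ^+ r)
               ((-1) ^+ a * y ^+ (n - r)) (x ^+ r) in
  let Dc := mx2 (x ^+ r) ((-1) ^+ a * y ^+ r)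
                ((-1) ^+ a.+1 * y ^+ (n - r)) (x ^+ (n - r)) in
  [/\ exact_mod f (row2 (x ^+ N) (y ^+ N)) D,
      exact_mod f D Dc
    & exact_mod f Dc D].
Proof.
move=> f N D Dc.
have hs : (-1) ^+ a * (-1) ^+ a = 1 :> P by rewrite -expr2 sqrr_sign.
have hsn : (-1) ^+ a.+1 = - (-1) ^+ a :> P by rewrite exprS mulN1r.
have hrn : (r <= n)%N by apply: leq_trans hr (leq_pred n).
have hx : x ^+ r * x ^+ (n - r) = x ^+ n by rewrite -exprD subnKC.
have hy : y ^+ r * y ^+ (n - r) = y ^+ n by rewrite -exprD subnKC.
have eD : D = mx2 (x ^+ (n - r)) (- (-1) ^+ a * y ^+ r)
               ((-1) ^+ a * y ^+ (n - r)) (x ^+ r) by rewrite /D hsn.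
have eDc : Dc = mx2 (x ^+ r) ((-1) ^+ a * y ^+ r)
                (- (-1) ^+ a * y ^+ (n - r)) (x ^+ (n - r)) by rewrite /Dc hsn.
have hxN : x ^+ N = (x ^+ n) ^+ a * x ^+ r by rewrite /N exprD mulnC exprM.
have hyN : y ^+ N = (y ^+ n) ^+ a * y ^+ r by rewrite /N exprD mulnC exprM.
split.
- split.
    apply: eqmodE2 => i j; rewrite /D row2_mul !mxE /= subr0.
    case: j => [[|[|j]] Hj] //=.
      by rewrite hxN hyN; apply: e0_id.
    by rewrite hsn hxN hyN; apply: e1_id.
  move=> u [C]; rewrite subr0 => hC.
  have := congr1 (fun M : 'M[P]_(1, 1) => M 0 0) hC.
  rewrite /= !mxE !big_ord_recr big_ord0 /= add0r !mxE /= => hC0.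
  have [v1 [v2 [h1 h2]]] := @Lker _ _ _ _ _ hxy hrn _ _ _ _ hC0.
  exists (\col_i (if (i == 0 :> nat) then v1 else v2)); exists 0.
  rewrite scaler0; apply/eqP; rewrite subr_eq0; apply/eqP; apply/matrixP => i j.
  rewrite (ord1 j) !mxE !big_ord_recr big_ord0 /= add0r !mxE /=.
  case: i => [[|[|i]] Hi] //=.
    have -> : Ordinal Hi = widen_ord (leqnSn 1) ord_max by apply: val_inj.
    by rewrite h1.
  have -> : Ordinal Hi = ord_max by apply: val_inj.
  by rewrite h2.
- apply: exact_fact => //.
    by rewrite eD eDc DDc // hx hy.
  by rewrite eD eDc DcD // hx hy.
- apply: exact_fact => //.
    by rewrite eD eDc DcD // hx hy.
  by rewrite eD eDc DDc // hx hy.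
Qed.
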